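(* For every $\alpha<1$ and $\lambda>0$ we have $\mathbb P_{\alpha,\lambda}(\text{percolation})=1$.
   Context: For a countable set $P\subseteq\mathbb R\times[0,\infty)$, $\Gamma(P)$ denotes the graph on vertex set $P$ in which distinct points $(x,y),(x',y')$ are adjacent iff $|x-x'|<e^{\frac12(y+y')}$. For $\alpha,\lambda>0$, $\mathcal P_{\alpha,\lambda}$ is a Poisson point process on $\mathbb R\times[0,\infty)$ with intensity function $\lambda e^{-\alpha y}$, $\mathbb P_{\alpha,\lambda}$ its law, and ''percolation'' is the event that $\Gamma(\mathcal P_{\alpha,\lambda})$ has an infinite connected component. *)

(* Defs.v *)
From HB Require Import structures.
From mathcomp Require Import all_boot all_order all_algebra.
From mathcomp Require Import all_classical all_reals all_analysis measurable_realfun.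
Set Implicit Arguments. Unset Strict Implicit. Unset Printing Implicit Defensive.
Import Order.TTheory GRing.Theory Num.Theory.
Import numFieldNormedType.Exports.
Local Open Scope classical_set_scope.
Local Open Scope ring_scope.

Definition upper_half {R : realType} : set (R * R) := [set p | 0 <= p.2].

Definition gamma_adj {R : realType} (P : set (R * R)) (p q : R * R) : Prop :=
  P p /\ P q /\ p <> q /\ `|p.1 - q.1| < expR ((p.2 + q.2) / 2).

Inductive gamma_reach {R : realType} (P : set (R * R)) (p : R * R) :
    R * R -> Prop :=
  | reach_refl : P p -> gamma_reach P p p
  | reach_step : forall q r, gamma_reach P p q -> gamma_adj P q r ->
      gamma_reach P p r.

Definition gamma_component {R : realType} (P : set (R * R)) (p : R * R) :
  set (R * R) := [set q | gamma_reach P p q].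

Definition percolates {R : realType} (P : set (R * R)) : Prop :=
  exists2 p, P p & infinite_set (gamma_component P p).

Definition intensity {R : realType} (alpha lambda : R) (A : set (R * R)) :
    \bar R :=
  (\int[(@lebesgue_measure R) \x (@lebesgue_measure R)]_(z in A `&` upper_half)
     (lambda * expR (- alpha * z.2))%:E)%E.

Definition count_in {R : realType} (S A : set (R * R)) : \bar R :=
  (\esum_(z in S `&` A) 1)%E.

Definition is_PPP {R : realType} {d : measure_display}
    {Omega : measurableType d} (Pr : probability Omega R)
    (alpha lambda : R) (X : Omega -> set (R * R)) : Prop :=
  [/\ forall w, X w `<=` upper_half,
      forall A : set (R * R), measurable A ->
        (intensity alpha lambda A < +oo)%E ->
        measurable_fun [set: Omega] ((fun w => count_in (X w) A) : Omega -> \bar R),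
      forall (A : set (R * R)) (k : nat), measurable A ->
        (intensity alpha lambda A < +oo)%E ->
        Pr [set w | count_in (X w) A = k%:R%:E] =
          (let m := fine (intensity alpha lambda A) in
           (m ^+ k * expR (- m) / k`!%:R)%:E)
    & forall (n : nat) (A : 'I_n -> set (R * R)) (k : 'I_n -> nat),
        (forall i, measurable (A i)) ->
        (forall i, (intensity alpha lambda (A i) < +oo)%E) ->
        (forall i j, i <> j -> A i `&` A j = set0) ->
        Pr (\bigcap_(i in [set: 'I_n]) [set w | count_in (X w) (A i) = (k i)%:R%:E])
          = (\prod_(i < n) Pr [set w | count_in (X w) (A i) = (k i)%:R%:E])%E].

(* Main.v *)
From HB Require Import structures.
From mathcomp Require Import all_boot all_order all_algebra.
From mathcomp Require Import all_classical all_reals all_analysis measurable_realfun.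
From mathcomp Require Import ring lra.
Require Import Defs.
Set Implicit Arguments. Unset Strict Implicit. Unset Printing Implicit Defensive.
Import Order.TTheory GRing.Theory Num.Theory.
Local Open Scope classical_set_scope.
Local Open Scope ring_scope.

Lemma geo_partial (R : realType) (N m : nat) :
  \sum_(N <= i < N + m) ((2:R) ^+ i.+1)^-1 = (2 ^+ N)^-1 - (2 ^+ (N + m))^-1.
Proof.
elim: m => [|m IH]; first by rewrite addn0 big_geq ?subrr.
rewrite addnS big_nat_recr ?leq_addr //= IH !exprS.
have h : (0:R) < 2 ^+ (N + m) by rewrite exprn_gt0.
field; by rewrite !expf_neq0.
Qed.

Lemma geo_tail (R : realType) (N : nat) :
  (\sum_(N <= i <oo) (((2:R) ^+ i.+1)^-1)%:E <= ((2 ^+ N)^-1)%:E)%E.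
Proof.
apply: lime_le.
  by apply: is_cvg_ereal_nneg_natsum_cond => n _ _; rewrite lee_fin invr_ge0 exprn_ge0.
apply: nearW => m; rewrite sumEFin lee_fin.
case: (leqP N m) => Nm.
  rewrite -(subnKC Nm) geo_partial lerBlDr lerDl invr_ge0 exprn_ge0 //.
by rewrite big_geq ?invr_ge0 ?exprn_ge0 // ltnW.
Qed.

Lemma ae_events d (Omega : measurableType d) (R : realType)
  (Pr : probability Omega R) (E : nat -> set Omega) (K0 : nat) (P : Omega -> Prop) :
  (forall n, measurable (E n)) ->
  (forall n, (K0 <= n)%N -> (Pr (E n) <= (((2:R) ^+ n.+1)^-1)%:E)%E) ->
  (forall w N, (forall n, (N <= n)%N -> ~ E n w) -> P w) ->
  {ae Pr, forall w, P w}.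
Proof.
move=> mE bE hP.
pose Ns := \bigcap_N \bigcup_(n in ~` `I_N) E n.
have mNs : measurable Ns.
  apply: bigcapT_measurable => N; apply: bigcup_measurable => n _; exact: mE.
exists Ns; split => //; last first.
  move=> w /= nPw N _; apply: contrapT => h; apply: nPw.
  apply: (hP w N) => n Nn En; apply: h; exists n => //=.
  by rewrite ltnNge Nn.
have key : forall N, (K0 <= N)%N -> (Pr Ns <= (((2:R) ^+ N)^-1)%:E)%E.
  move=> N KN; apply: le_trans (geo_tail R N).
  pose E' n := if (K0 <= n)%N then E n else set0.
  apply: le_trans.
    apply: (@measure_sigma_subadditive_tail _ _ _ Pr Ns E' N).
    - by move=> n; rewrite /E'; case: ifP.
    - exact: mNs.
    - move=> w /(_ N I) [n /= Nn Enw]; exists n => //.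
      rewrite /E' ifT //; apply: (leq_trans KN); rewrite leqNgt; exact/negP.
  apply: lee_nneseries => n // _; rewrite /E'; case: ifP => h; first exact: bE.
  by rewrite measure0 lee_fin invr_ge0 exprn_ge0.
have fin : Pr Ns \is a fin_num.
  rewrite ge0_fin_numE ?measure_ge0 //.
  by apply: le_lt_trans (probability_le1 Pr mNs) _; rewrite ltry.
apply: le_anti; rewrite measure_ge0 andbT -(fineK fin) lee_fin.
set x := fine (Pr Ns).
rewrite leNgt; apply/negP => x0.
pose N := maxn K0 (Num.Def.truncn (x^-1)).+1.
have := key N (leq_maxl _ _); rewrite -(fineK fin) lee_fin -/x.
apply/negP; rewrite -ltNge.
have p2 : (0:R) < 2 ^+ N by rewrite exprn_gt0.
rewrite invf_plt ?posrE //.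
apply: (lt_le_trans (truncnS_gt _)).
apply: (le_trans (y := N%:R)); first by rewrite ler_nat leq_maxr.
rewrite -natrX ler_nat; exact/ltnW/ltn_expl.
Qed.

Definition tt_ (R : realType) (h : R) (n : nat) : R := h * n%:R.
Definition wd (R : realType) (h : R) (n : nat) : R := expR (tt_ h n - h / 2).
Definition box (R : realType) (h : R) (n : nat) : set (R * R) :=
  `[0, wd h n[ `*` `[tt_ h n, tt_ h n + h[.

Lemma boxP (R : realType) (h : R) n p :
  box h n p <-> (0 <= p.1 < wd h n) /\ (tt_ h n <= p.2 < tt_ h n + h).
Proof. by rewrite /box /setX /= !in_itv /=. Qed.

Lemma intens_bounds (R : realType) (a l h : R) n : 0 < a -> 0 < l -> 0 < h ->
  ((l * expR (- a * (tt_ h n + h)) * (wd h n * h))%:E <= intensity a l (box h n))%E /\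
  (intensity a l (box h n) < +oo)%E.
Proof.
move=> a0 l0 h0.
have mbox : measurable (box h n) by apply: measurableX; exact: measurable_itv.
have boxI : box h n `&` upper_half = box h n.
  apply/seteqP; split => [z []//|z bz]; split => //.
  move/boxP: bz => [_ /andP [c _]]; rewrite /upper_half /=.
  apply: le_trans c; apply: mulr_ge0; [exact: ltW | exact: ler0n].
have mf : measurable_fun (box h n) (fun z : R * R => (l * expR (- a * z.2))%:E).
  apply: measurableT_comp => //; apply: measurable_funM => //.
  apply: measurableT_comp => //; apply: measurable_funM => //.
  apply: measurable_funTS; exact: measurable_snd.
have mb : ((@lebesgue_measure R) \x (@lebesgue_measure R))%E (box h n) = (wd h n * h)%:E.
  rewrite /box product_measure1E ?lebesgue_measure_itv /=; try exact: measurable_itv.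
  rewrite !lebesgue_measure_itv /= !lte_fin expR_gt0 ltrDl h0 -!EFinD -EFinM.
  by congr (_%:E); rewrite subr0 addrC addKr.
rewrite /intensity boxI; split.
  apply: le_trans; last first.
    apply: (@ge0_le_integral _ _ _ _ _ _ (fun _ => (l * expR (- a * (tt_ h n + h)))%:E)) => //.
    - move=> z _; rewrite lee_fin mulr_ge0 ?expR_ge0 ?ltW //.
    - move=> z /boxP [_ /andP [_ d]]; rewrite lee_fin ler_pM2l // ler_expR.
      nra.
  rewrite integral_cst //.
  rewrite [X in (_ <= _ * X)%E](_ : _ = (wd h n * h)%:E); last exact: mb.
  by rewrite EFinM.
apply: le_lt_trans.
  apply: (@ge0_le_integral _ _ _ _ _ _ _ (fun _ => l%:E)) => //.
  - move=> z _; rewrite lee_fin mulr_ge0 ?expR_ge0 ?ltW //.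
  - move=> z /boxP [_ /andP [c _]]; rewrite lee_fin ger_pMr // expR_le1.
    have := mulr_ge0 (ltW h0) (ler0n _ n); rewrite -/(tt_ h n); nra.
rewrite integral_cst //.
rewrite [X in (_ * X)%E](_ : _ = (wd h n * h)%:E); last exact: mb.
by rewrite -EFinM ltry.
Qed.

Lemma tt_S (R : realType) (h : R) n : tt_ h n.+1 = tt_ h n + h.
Proof. by rewrite /tt_ -addn1 natrD mulrDr mulr1. Qed.

Lemma det_perc (R : realType) (h : R) (S : set (R * R)) N : 0 < h ->
  (forall n, (N <= n)%N -> exists p, S p /\ box h n p) -> percolates S.
Proof.
move=> h0 hS.
have : forall n, exists p, (N <= n)%N -> S p /\ box h n p.
  move=> n; case: (leqP N n) => Nn.
    by have [p Hp] := hS n Nn; exists p.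
  by exists (0,0).
case/choice => p Hp.
have Hp' k : S (p (N + k)%N) /\ box h (N + k)%N (p (N + k)%N) by apply: Hp; rewrite leq_addr.
have adj k : gamma_adj S (p (N + k)%N) (p (N + k.+1)%N).
  have [S1 /boxP [/andP [a1 b1] /andP [c1 d1]]] := Hp' k.
  have [S2 /boxP [/andP [a2 b2] /andP [c2 d2]]] := Hp' k.+1.
  move: S2 a2 b2 c2 d2; rewrite addnS tt_S => S2 a2 b2 c2 d2.
  rewrite /gamma_adj; split => //; split => //; split.
    by move=> e; move: d1; rewrite e; lra.
  have : wd h (N + k).+1 <= expR ((p (N + k)%N).2 / 2 + (p (N + k).+1).2 / 2).
    rewrite /wd ler_expR tt_S; lra.
  have : wd h (N + k) <= wd h (N + k).+1.
    by rewrite /wd ler_expR tt_S; lra.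
  move=> w1 w2.
  rewrite mulrDl; rewrite ltr_norml; apply/andP; split; lra.
have reach k : gamma_reach S (p N) (p (N + k)%N).
  elim: k => [|k IH]; first by rewrite addn0; apply: reach_refl; have := (Hp' 0%N).1; rewrite addn0.
  exact: reach_step IH (adj k).
have ttle m n : (m <= n)%N -> tt_ h m <= tt_ h n.
  by move=> mn; rewrite /tt_; apply: ler_wpM2l; [exact: ltW | rewrite ler_nat].
have lt2 j k : (j < k)%N -> (p (N + j)%N).2 < (p (N + k)%N).2.
  move=> jk.
  have [_ /boxP [_ /andP [_ d1]]] := Hp' j.
  have [_ /boxP [_ /andP [c2 _]]] := Hp' k.
  have := ttle (N + j).+1 (N + k)%N; rewrite tt_S ltn_add2l => /(_ jk) t.
  lra.
have inj : injective (fun k => p (N + k)%N).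
  move=> j k /= e; case: (ltngtP j k) => // jk.
    by have := lt2 _ _ jk; rewrite e ltxx.
  by have := lt2 _ _ jk; rewrite e ltxx.
exists (p N); first by have := (Hp' 0%N).1; rewrite addn0.
move=> fin.
have : finite_set ((fun k => p (N + k)%N) @^-1` gamma_component S (p N)).
  by apply: finite_preimage => // j k _ _; apply: inj.
have -> : (fun k => p (N + k)%N) @^-1` gamma_component S (p N) = setT.
  by apply/seteqP; split => // k _; exact: reach.
exact: infinite_nat.
Qed.

Theorem lemma2p11 (R : realType) (d : measure_display) (Omega : measurableType d)
    (Pr : probability Omega R) (alpha lambda : R)
    (X : Omega -> set (R * R)) :
  0 < alpha -> alpha < 1 -> 0 < lambda ->
  is_PPP Pr alpha lambda X ->
  {ae Pr, forall w, percolates (X w)}.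
Proof.
move=> a0 a1 l0 [_ Hmeas Hlaw _].
set a := alpha in a0 a1 *; set l := lambda in l0 *.
pose h : R := 4 / (1 - a).
have h0 : 0 < h by rewrite /h divr_gt0 // subr_gt0.
have h1 : h * (1 - a) = 4 by rewrite /h divfK // subr_eq0 gt_eqF.
pose C : R := l * h * expR (- (a * h) - h / 2).
have C0 : 0 < C by apply: mulr_gt0; [exact: mulr_gt0|exact: expR_gt0].
pose E n := [set w | count_in (X w) (box h n) = 0%:R%:E].
have mbox n : measurable (box h n) by apply: measurableX; exact: measurable_itv.
pose K0 := (Num.Def.truncn (2 / C)).+1.
apply: (@ae_events _ _ _ Pr E K0).
- move=> n; have [_ fin] := intens_bounds n a0 l0 h0.
  have := Hmeas _ (mbox n) fin measurableT [set 0%:R%:E] (emeasurable_set1 _).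
  by rewrite setTI.
- move=> n Kn; have [lo fin] := intens_bounds n a0 l0 h0.
  rewrite /E (Hlaw _ 0%N (mbox n) fin) /= expr0 mul1r fact0 divr1 lee_fin.
  set m := fine _.
  have fin' : intensity a l (box h n) \is a fin_num.
    rewrite ge0_fin_numE ?fin //; apply: le_trans lo; rewrite lee_fin.
    apply: mulr_ge0; [apply: mulr_ge0; [exact: ltW|exact: expR_ge0] | apply: mulr_ge0; [exact: expR_ge0|exact: ltW]].
  have lom : l * expR (- a * (tt_ h n + h)) * (wd h n * h) <= m.
    by rewrite -lee_fin /m (fineK fin').
  have eq1 : l * expR (- a * (tt_ h n + h)) * (wd h n * h) = C * expR 4 ^+ n.
    rewrite /C /wd -expRM_natl.
    transitivity (l * h * expR (- a * (tt_ h n + h) + (tt_ h n - h / 2))).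
      rewrite [in RHS]expRD; ring.
    rewrite -[RHS]mulrA -expRD; congr (_ * expR _).
    rewrite /tt_ -h1; ring.
  have e4 : (4:R) ^+ n <= expR 4 ^+ n.
    rewrite lerXn2r ?nnegrE ?expR_ge0 //.
    by apply: le_trans (expR_ge1Dx _); rewrite lerDr.
  have n2 : 2 / C < n%:R.
    apply: (lt_le_trans (truncnS_gt _)); by rewrite ler_nat.
  have p2n : (n%:R : R) <= 2 ^+ n by rewrite -natrX ler_nat ltnW // ltn_expl.
  have m2 : (2:R) ^+ n.+1 <= m.
    apply: le_trans lom; rewrite eq1.
    apply: (le_trans (y := C * 4 ^+ n)); last by rewrite ler_pM2l.
    have -> : (4:R) ^+ n = 2 ^+ n * 2 ^+ n by rewrite -exprMn; congr (_ ^+ _); ring.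
    rewrite exprS mulrA [C * _]mulrC ler_pM2r ?exprn_gt0 //.
    by rewrite -ler_pdivrMr // (le_trans (ltW n2)).
  have m0 : 0 < m by apply: lt_le_trans m2; rewrite exprn_gt0.
  rewrite expRN lef_pV2 ?posrE ?exprn_gt0 ?expR_gt0 //.
  apply: le_trans m2 _; apply: le_trans (expR_ge1Dx _); rewrite lerDr //.
- move=> w N HN; apply: (@det_perc R h (X w) N h0) => n Nn.
  apply: contrapT => nex; apply: (HN n Nn); rewrite /E /= /count_in.
  have -> : X w `&` box h n = set0.
    apply/seteqP; split => // p [Xp bp]; apply: nex; by exists p.
  by rewrite esum_set0.
Qed.
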